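(* Let $A$ be a real $m\times n$ matrix, $\mathbf b\in\mathbb R^m$, $\mathbf c\in\mathbb R^n$ (row vector), such that the linear program $\max\mathbf c\mathbf x$ s.t. $A\mathbf x\le\mathbf b$, $\mathbf x\ge0$ has unique optimal primal and dual solutions $\mathbf x^*$, $\mathbf y^*$. Let $\lambda=\min(\alpha_P,\alpha_D,\beta_P,\beta_D)$. Then for every primal feasible $\mathbf x$, \[ \|\mathbf x^*-\mathbf x\|_\infty\le\mathbf c(\mathbf x^*-\mathbf x)\left(\frac{1+\|A\|}{\lambda\min(\gamma,1)}\right). \]
   Context: The dual is $\min\mathbf y\mathbf b$ s.t. $\mathbf yA\ge\mathbf c$, $\mathbf y\ge0$. $U=\{i:x^*_i>0\}$, $V=\{j:y^*_j>0\}$, $\bar U,\bar V$ complements. $\alpha_P=\min_{i\in U}x^*_i$, $\alpha_D=\min_{j\in V}y^*_j$, $\beta_P=\min_{j\in\bar V}(b_j-A_{j,:}\mathbf x^* )$, $\beta_D=\min_{i\in\bar U}(\mathbf y^*A_{:,i}-c_i)$, $\gamma=\min_{k\in U}\mathrm{dist}(A_{V,k},\mathrm{span}(A_{V,U\setminus\{k\}}))$, where $A_{V,k}$ is column $k$ restricted to rows $V$ and $\mathrm{span}(A_{V,U\setminus\{k\}})$ is the span of the columns indexed by $U\setminus\{k\}$ restricted to rows $V$. $\|A\|$ is the spectral norm and $\|\cdot\|_\infty$ the max-norm. *)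

(* Defs.v *)
From HB Require Import structures.
From mathcomp Require Import all_boot all_order all_algebra.
From mathcomp Require Import boolp classical_sets reals constructive_ereal.
Set Implicit Arguments. Unset Strict Implicit. Unset Printing Implicit Defensive.
Import Order.TTheory GRing.Theory Num.Theory.
Local Open Scope ring_scope.

Section LPDefs.
Variable R : realType.
Variables m n : nat.

Definition lemx p q (M N : 'M[R]_(p, q)) : Prop := forall i j, M i j <= N i j.

Definition primal_feasible (A : 'M[R]_(m, n)) (b : 'cV[R]_m) (x : 'cV[R]_n) :=
  lemx (A *m x) b /\ lemx 0 x.
Definition primal_optimal A b (c : 'rV[R]_n) x :=
  primal_feasible A b x /\
  forall x', primal_feasible A b x' -> (c *m x') 0 0 <= (c *m x) 0 0.

Definition dual_feasible (A : 'M[R]_(m, n)) (c : 'rV[R]_n) (y : 'rV[R]_m) :=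
  lemx c (y *m A) /\ lemx 0 y.
Definition dual_optimal A (b : 'cV[R]_m) c y :=
  dual_feasible A c y /\
  forall y', dual_feasible A c y' -> (y *m b) 0 0 <= (y' *m b) 0 0.

Definition normInf (v : 'cV[R]_n) : R := \big[Num.max/0]_(i < n) `|v i 0|.

Definition norm2 p (v : 'cV[R]_p) : R := Num.sqrt (\sum_(i < p) v i 0 ^+ 2).

Definition specnorm (A : 'M[R]_(m, n)) : R :=
  sup [set e : R | exists x : 'cV[R]_n, norm2 x <= 1 /\ e = norm2 (A *m x)]%classic.

Definition Uset (xs : 'cV[R]_n) : {set 'I_n} := [set i | 0 < xs i 0].
Definition Vset (ys : 'rV[R]_m) : {set 'I_m} := [set j | 0 < ys 0 j].

(* minima over (possibly empty) finite index sets, with min of empty = +oo *)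
Definition alphaP xs : \bar R :=
  \big[mine/+oo%E]_(i in Uset xs) (xs i 0)%:E.
Definition alphaD ys : \bar R :=
  \big[mine/+oo%E]_(j in Vset ys) (ys 0 j)%:E.
Definition betaP (A : 'M[R]_(m, n)) (b : 'cV[R]_m) (xs : 'cV[R]_n) (ys : 'rV[R]_m) : \bar R :=
  \big[mine/+oo%E]_(j in ~: Vset ys) (b j 0 - (A *m xs) j 0)%:E.
Definition betaD (A : 'M[R]_(m, n)) (c : 'rV[R]_n) (xs : 'cV[R]_n) (ys : 'rV[R]_m) : \bar R :=
  \big[mine/+oo%E]_(i in ~: Uset xs) ((ys *m A) 0 i - c 0 i)%:E.

(* Euclidean distance, in the coordinates indexed by V, from column k of A
   to the span of the columns of A indexed by U \ {k} *)
Definition dist_col (A : 'M[R]_(m, n)) (V : {set 'I_m}) (U : {set 'I_n})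
    (k : 'I_n) : R :=
  inf [set d : R | exists a : 'I_n -> R,
    d = Num.sqrt (\sum_(j in V)
          (A j k - \sum_(i in U :\ k) a i * A j i) ^+ 2)]%classic.

Definition gammaA (A : 'M[R]_(m, n)) (xs : 'cV[R]_n) (ys : 'rV[R]_m) : \bar R :=
  \big[mine/+oo%E]_(k in Uset xs) (dist_col A (Vset ys) (Uset xs) k)%:E.

Definition lambdaA (A : 'M[R]_(m, n)) (b : 'cV[R]_m) (c : 'rV[R]_n) (xs : 'cV[R]_n) (ys : 'rV[R]_m) : \bar R :=
  mine (mine (alphaP xs) (alphaD ys)) (mine (betaP A b xs ys) (betaD A c xs ys)).

End LPDefs.

(* Main.v *)
Require Import Defs.
From HB Require Import structures.
From mathcomp Require Import all_boot all_order all_algebra.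
From mathcomp Require Import ring lra.
From mathcomp Require Import boolp classical_sets reals constructive_ereal.
From Stdlib Require List Classical.
Import Order.TTheory GRing.Theory Num.Theory.
Local Open Scope ring_scope.

Section FM.
Variable R : realFieldType.

Definition dotn (n : nat) (a x : nat -> R) : R := \sum_(i < n) a i * x i.

Inductive der (L : list ((nat -> R) * R)) : (nat -> R) * R -> Prop :=
| der_in e : List.In e L -> der L e
| der_comb a1 b1 a2 b2 s1 s2 : der L (a1, b1) -> der L (a2, b2) -> 0 <= s1 -> 0 <= s2 ->
    der L (fun k => s1 * a1 k + s2 * a2 k, s1 * b1 + s2 * b2).

Lemma der_trans L L' d : (forall e, List.In e L' -> der L e) -> der L' d -> der L d.
Proof.
move=> H; elim=> [e /H //|a1 b1 a2 b2 s1 s2 _ H1 _ H2 h1 h2].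
exact: der_comb.
Qed.

Lemma der_coord L n d : (forall e, List.In e L -> e.1 n = 0) -> der L d -> d.1 n = 0.
Proof.
move=> H; elim=> [e /H //|a1 b1 a2 b2 s1 s2 _ H1 _ H2 h1 h2] /=.
by rewrite /= in H1 H2; rewrite H1 H2 !mulr0 addr0.
Qed.

Lemma sep_exists (T1 T2 : Type) (N : list T1) (P : list T2) (f : T1 -> R) (g : T2 -> R) :
  (forall q p, List.In q N -> List.In p P -> f q <= g p) ->
  exists t, (forall q, List.In q N -> f q <= t) /\ (forall p, List.In p P -> t <= g p).
Proof.
elim: N => [|q N IH] H.
  elim: P {H} => [|p P IH]; first by exists 0.
  have [t [_ Ht]] := IH; exists (Num.min t (g p)); split=> //.
  move=> p' [<-|/Ht h]; first by rewrite ge_min lexx orbT.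
  by rewrite ge_min h.
have [|t [H1 H2]] := IH; first by move=> q' p hq hp; apply: H => //; right.
exists (Num.max (f q) t); split.
  by move=> q' [<-|/H1 h]; rewrite le_max ?lexx ?h ?orbT.
move=> p hp; rewrite ge_max H2 // andbT; by apply: H => //; left.
Qed.

Lemma dotn_S n a x : dotn n.+1 a x = dotn n a x + a n * x n.
Proof. by rewrite /dotn big_ord_recr. Qed.

Lemma dotn_comb n s1 s2 a1 a2 x :
  dotn n (fun k => s1 * a1 k + s2 * a2 k) x = s1 * dotn n a1 x + s2 * dotn n a2 x.
Proof.
rewrite /dotn !mulr_sumr -big_split /=; apply: eq_bigr => i _; ring.
Qed.

Lemma dotn_ext n a x x' : (forall k, (k < n)%N -> x k = x' k) -> dotn n a x = dotn n a x'.
Proof. by move=> H; apply: eq_bigr => i _; rewrite H. Qed.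

Definition feasible n (L : list ((nat -> R) * R)) x := forall e, List.In e L -> dotn n e.1 x <= e.2.

Theorem fourier_motzkin n L :
  ~ (exists x, feasible n L x) ->
  exists a b, der L (a, b) /\ (forall k, (k < n)%N -> a k = 0) /\ b < 0.
Proof.
elim: n L => [|n IH] L Hinf.
  have : ~ (forall e, List.In e L -> 0 <= e.2).
    by move=> H; apply: Hinf; exists (fun _ => 0) => e /H; rewrite /dotn big_ord0.
  move=> /Classical_Pred_Type.not_all_ex_not [[a b] Hab].
  have [Hin Hb] := Classical_Prop.imply_to_and _ _ Hab.
  exists a, b; split; first exact: der_in.
  by split=> // ; rewrite ltNge; apply/negP.
pose Z := List.filter (fun e : (nat -> R) * R => e.1 n == 0) L.
pose P := List.filter (fun e : (nat -> R) * R => 0 < e.1 n) L.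
pose N := List.filter (fun e : (nat -> R) * R => e.1 n < 0) L.
pose comb (p q : (nat -> R) * R) : (nat -> R) * R :=
  (fun k => (- q.1 n) * p.1 k + p.1 n * q.1 k, (- q.1 n) * p.2 + p.1 n * q.2).
pose L' := List.app Z (List.flat_map (fun p => List.map (comb p) N) P).
have HL' : forall e, List.In e L' -> der L e /\ e.1 n = 0.
  move=> e /List.in_app_iff [/List.filter_In [h1 /eqP h2]|]; first by split=> //; exact: der_in.
  move=> /List.in_flat_map [p [/List.filter_In [hp1 hp2] /List.in_map_iff [q [<- /List.filter_In [hq1 hq2]]]]].
  split; last by rewrite /=; ring.
  case: p hp1 hp2 => [pa pb] hp1 hp2; case: q hq1 hq2 => [qa qb] hq1 hq2 /=.
  rewrite /= in hp2 hq2.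
  apply: der_comb; try exact: der_in; last exact: ltW.
  by rewrite oppr_ge0 ltW.
have [[x Hx]|Hinf'] := Classical_Prop.classic (exists x, feasible n L' x).
  exfalso; apply: Hinf.
  have [|t [Ht1 Ht2]] := @sep_exists _ _ N P
    (fun q => (q.2 - dotn n q.1 x) / q.1 n) (fun p => (p.2 - dotn n p.1 x) / p.1 n).
    move=> q p /List.filter_In [hq1 hq2] /List.filter_In [hp1 hp2].
    have : List.In (comb p q) L'.
      by apply/List.in_app_iff; right; apply/List.in_flat_map; exists p; split;
        [apply/List.filter_In | apply/List.in_map_iff; exists q; split => //; apply/List.filter_In].
    move=> /Hx; rewrite /= dotn_comb => h.
    rewrite ler_pdivlMr // mulrAC ler_ndivrMr //.
    set u := dotn n q.1 x in h *; set v := dotn n p.1 x in h *.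
    nra.
  exists (fun k => if k == n then t else x k) => e He.
  rewrite dotn_S eqxx (@dotn_ext n _ _ x); last by move=> k hk; rewrite ltn_eqF.
  case: (ltgtP (e.1 n) 0) => he.
  - have := Ht1 e (proj2 (List.filter_In _ _ _) (conj He he)).
    rewrite ler_ndivrMr // => h; lra.
  - have := Ht2 e (proj2 (List.filter_In _ _ _) (conj He he)).
    rewrite ler_pdivlMr // => h; lra.
  - have := Hx e (proj2 (List.in_app_iff _ _ _) (or_introl (proj2 (List.filter_In _ _ _) (conj He (introT eqP he))))).
    rewrite he mul0r addr0 //.
have [a [b [Hd [Ha Hb]]]] := IH L' Hinf'.
exists a, b; split; first by apply: der_trans Hd => e /HL' [].
split=> // k; rewrite ltnS leq_eqVlt => /orP [/eqP ->|/Ha //].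
by apply: (@der_coord L' n (a, b)) => // e /HL' [].
Qed.
End FM.
Arguments fourier_motzkin {R n L}. Arguments dotn {R}. Arguments feasible {R}. Arguments der {R}.
Set Implicit Arguments. Unset Strict Implicit.
Section Dual.
Variable R : realType.
Variables m n : nat.
Implicit Types (A : 'M[R]_(m, n)) (b : 'cV[R]_m) (c : 'rV[R]_n).

Lemma inP_mem (T : eqType) (x : T) (s : seq T) : x \in s -> List.In x s.
Proof. elim: s => //= y s IH; rewrite in_cons => /orP [/eqP ->|/IH]; by [left|right]. Qed.

Definition ext (f : 'I_n -> R) : nat -> R := fun k => \sum_(i < n | val i == k) f i.

Lemma ext_ord f (i : 'I_n) : ext f i = f i.
Proof.
rewrite /ext (eq_bigl (fun i' => i' == i)) ?big_pred1_eq //.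
Qed.

Lemma dot_ext f x : dotn n (ext f) x = \sum_(i < n) f i * x i.
Proof. by apply: eq_bigr => i _; rewrite ext_ord. Qed.

Lemma rowcol_le (y : 'rV[R]_m) (u v : 'cV[R]_m) :
  lemx 0 y -> lemx u v -> (y *m u) 0 0 <= (y *m v) 0 0.
Proof.
move=> hy huv; rewrite !mxE; apply: ler_sum => j _.
by apply: ler_wpM2l; [have := hy 0 j; rewrite mxE | exact: huv].
Qed.

Lemma rowcol_le2 (u v : 'rV[R]_n) (x : 'cV[R]_n) :
  lemx 0 x -> lemx u v -> (u *m x) 0 0 <= (v *m x) 0 0.
Proof.
move=> hx huv; rewrite !mxE; apply: ler_sum => j _.
by apply: ler_wpM2r; [have := hx j 0; rewrite mxE | exact: huv].
Qed.

Lemma weak_duality A b c x y : primal_feasible A b x -> dual_feasible A c y ->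
  (c *m x) 0 0 <= (y *m b) 0 0.
Proof.
move=> [hAx hx] [hyA hy].
have h1 := rowcol_le2 hx hyA.
have h2 : ((y *m A) *m x) 0 0 <= (y *m b) 0 0 by rewrite -mulmxA; apply: rowcol_le.
exact: le_trans h1 h2.
Qed.

Lemma strong_duality A b c xs ys : primal_optimal A b c xs -> dual_optimal A b c ys ->
  (ys *m b) 0 0 = (c *m xs) 0 0.
Proof.
move=> [hxs oxs] [hys oys].
apply/eqP; rewrite eq_le (weak_duality hxs hys) andbT.
apply/ler_addgt0Pr => eps he.
set d := (c *m xs) 0 0 + eps.
pose L := List.app (List.map (fun j => (ext (fun i => A j i), b j 0)) (enum 'I_m))
   (List.app (List.map (fun k => (ext (fun i => - (i == k)%:R), 0)) (enum 'I_n))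
   (cons (ext (fun i => - c 0 i), - d) nil)).
have Hinf : ~ (exists x, feasible n L x).
  move=> [x Hx].
  pose xv := \col_(i < n) x i.
  have hf : primal_feasible A b xv.
    split=> [j k|i k].
      have := Hx _ (List.in_or_app _ _ _ (or_introl (List.in_map (fun j => (ext (fun i => A j i), b j 0)) _ j (inP_mem (mem_enum _ j))))).
      rewrite /= dot_ext => h; rewrite ord1 mxE; under eq_bigr do rewrite mxE; exact: h.
    have := Hx _ (List.in_or_app _ _ _ (or_intror (List.in_or_app _ _ _ (or_introl (List.in_map (fun k => (ext (fun i => - (i == k)%:R), 0)) _ i (inP_mem (mem_enum _ i))))))).
    rewrite /= dot_ext (bigD1 i) //= eqxx big1 => [|i' /negbTE ->]; last by rewrite oppr0 mul0r.
    by rewrite addr0 mulN1r oppr_le0 ord1 !mxE.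
  have : List.In (ext (fun i => - c 0 i), - d) L.
    by apply: List.in_or_app; right; apply: List.in_or_app; right; left.
  move=> /Hx; rewrite /= dot_ext => h.
  have := oxs _ hf; rewrite mxE.
  under eq_bigr do rewrite mxE.
  have -> : \sum_(i < n) c 0 i * x i = - \sum_(i < n) - c 0 i * x i.
    by rewrite -sumrN; apply: eq_bigr => i _; rewrite mulNr opprK.
  rewrite /d in h; lra.
have [a [be [Hd [Ha Hb]]]] := fourier_motzkin Hinf.
have inv : forall e, der L e -> exists (y : 'rV[R]_m) (t : R), lemx 0 y /\ 0 <= t /\
    (forall i : 'I_n, e.1 i <= (y *m A) 0 i - t * c 0 i) /\ (y *m b) 0 0 - t * d <= e.2.
  move=> e; elim => {e} [e|a1 b1 a2 b2 s1 s2 _ [y1 [t1 [hy1 [ht1 [ha1 hb1]]]]] _ [y2 [t2 [hy2 [ht2 [ha2 hb2]]]]] hs1 hs2].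
    move=> /List.in_app_iff [/List.in_map_iff [j [<- _]]|/List.in_app_iff [/List.in_map_iff [k [<- _]]|[<-|//]]].
    - exists (\row_(j' < m) (j' == j)%:R), 0; split; first by move=> ? ?; rewrite !mxE ler0n.
      split=> //; split=> [i|]; rewrite /= ?ext_ord !mxE (bigD1 j) //= big1 ?mxE ?eqxx ?mul1r ?mul0r ?addr0 ?subr0 //;
        by move=> j' /negbTE hj; rewrite mxE hj mul0r.
    - exists 0, 0; split; first by move=> ? ?; rewrite mxE.
      split=> //; split=> [i|]; rewrite /= ?ext_ord ?mul0mx ?mxE ?mul0r ?subr0 //.
      by rewrite oppr_le0 ler0n.
    - exists 0, 1; split; first by move=> ? ?; rewrite mxE.
      split=> //; split=> [i|]; rewrite /= ?ext_ord ?mul0mx ?mxE ?mul1r ?sub0r //.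
  exists (s1 *: y1 + s2 *: y2), (s1 * t1 + s2 * t2); split.
    move=> i0 j; rewrite ord1 !mxE; have := hy1 0 j; have := hy2 0 j; rewrite !mxE => h2 h1.
    by apply: addr_ge0; apply: mulr_ge0.
  split; first by apply: addr_ge0; apply: mulr_ge0.
  split.
    move=> i /=; rewrite mulmxDl -!scalemxAl !mxE.
    have := ha1 i; have := ha2 i => /= h2 h1.
    have := ler_wpM2l hs1 h1; have := ler_wpM2l hs2 h2; rewrite !mxE; lra.
  rewrite /= mulmxDl -!scalemxAl !mxE.
  have := ler_wpM2l hs1 hb1; have := ler_wpM2l hs2 hb2; rewrite /= !mxE => h2 h1; lra.
have [y [t [hy [ht [hyA hyb]]]]] := inv _ Hd.
rewrite /= in hyA hyb.
have hyA' : forall i : 'I_n, t * c 0 i <= (y *m A) 0 i.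
  by move=> i; have := hyA i; rewrite Ha //; lra.
move: ht; rewrite le_eqVlt => /orP [/eqP t0|tpos].
  exfalso.
  have h1 : (y *m (A *m xs)) 0 0 <= (y *m b) 0 0 by apply: rowcol_le => //; case: hxs.
  have h2 : ((0 : 'rV[R]_n) *m xs) 0 0 <= ((y *m A) *m xs) 0 0.
    apply: rowcol_le2; first by case: hxs.
    by move=> i0 i; rewrite ord1 mxE; have := hyA' i; rewrite -t0 mul0r.
  rewrite mul0mx mxE -mulmxA in h2.
  rewrite -t0 mul0r subr0 in hyb; lra.
have hdual : dual_feasible A c (t^-1 *: y).
  split=> [? i|? j]; rewrite ?ord1 -?scalemxAl !mxE.
    rewrite mulrC ler_pdivlMr //; have := hyA' i; rewrite mxE; lra.
  apply: mulr_ge0; [by rewrite invr_ge0 ltW | by have := hy 0 j; rewrite mxE].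
have e1 : (t^-1 *: (y *m b)) 0 0 = t^-1 * (y *m b) 0 0 by rewrite [LHS]mxE.
have := oys _ hdual; rewrite -scalemxAl e1 => h.
have : t^-1 * (y *m b) 0 0 < d.
  rewrite ltr_pdivrMl //. lra.
lra.
Qed.
End Dual.

Section Norms.
Variable R : realType.

Lemma bigmin_le (I : finType) (P : pred I) (F : I -> \bar R) i0 :
  P i0 -> (\big[mine/+oo%E]_(i | P i) F i <= F i0)%E.
Proof. by move=> h; rewrite (bigD1 i0) //= ge_min lexx. Qed.

Lemma bigmin_ge0 (I : finType) (P : pred I) (F : I -> \bar R) :
  (forall i, P i -> (0 <= F i)%E) -> (0 <= \big[mine/+oo%E]_(i | P i) F i)%E.
Proof.
move=> h; apply: (big_ind (fun v => 0 <= v)%E) => //; first exact: leey.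
by move=> u v hu hv; rewrite le_min hu hv.
Qed.

Lemma sum_sq_le_sq_sum (I : finType) (P : pred I) (u : I -> R) :
  (forall j, P j -> 0 <= u j) ->
  \sum_(j | P j) u j ^+ 2 <= (\sum_(j | P j) u j) ^+ 2.
Proof.
move=> h.
suff : 0 <= \sum_(j | P j) u j /\ \sum_(j | P j) u j ^+ 2 <= (\sum_(j | P j) u j) ^+ 2 by case.
apply: (big_ind2 (fun a b => 0 <= b /\ a <= b ^+ 2)).
- by rewrite expr0n /=.
- move=> x1 x2 y1 y2 [h1 h2] [h3 h4]; split; first exact: addr_ge0.
  rewrite sqrrD; nra.
- by move=> j hj; split; [exact: h|].
Qed.

Lemma sqrt_sum_le (I : finType) (P : pred I) (u : I -> R) :
  (forall j, P j -> 0 <= u j) ->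
  Num.sqrt (\sum_(j | P j) u j ^+ 2) <= \sum_(j | P j) u j.
Proof.
move=> h; have h0 : 0 <= \sum_(j | P j) u j by apply: sumr_ge0.
rewrite -(ger0_norm h0) -sqrtr_sqr ler_sqrt ?sqr_ge0 //.
exact: sum_sq_le_sq_sum.
Qed.

Lemma sum_sq_ge0 (I : finType) (P : pred I) (u : I -> R) : 0 <= \sum_(j | P j) u j ^+ 2.
Proof. by apply: sumr_ge0 => j _; rewrite sqr_ge0. Qed.

Lemma cauchy_schwarz (I : finType) (P : pred I) (u v : I -> R) :
  (\sum_(j | P j) u j * v j) ^+ 2 <=
  (\sum_(j | P j) u j ^+ 2) * (\sum_(j | P j) v j ^+ 2).
Proof.
set A := \sum_(j | P j) u j ^+ 2; set B := \sum_(j | P j) v j ^+ 2.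
set C := \sum_(j | P j) u j * v j.
have hB : 0 <= B by exact: sum_sq_ge0.
have hA : 0 <= A by exact: sum_sq_ge0.
have key : 0 <= B * (A * B - C ^+ 2).
  have -> : B * (A * B - C ^+ 2) = \sum_(j | P j) (B * u j - C * v j) ^+ 2.
    rewrite [RHS](eq_bigr (fun j => B ^+ 2 * u j ^+ 2 - (2 * B * C) * (u j * v j) + C ^+ 2 * v j ^+ 2)); last by move=> j _; ring.
    rewrite big_split /= sumrB -!mulr_sumr -/A -/B -/C; ring.
  exact: sum_sq_ge0.
move: hB; rewrite le_eqVlt => /orP [/eqP hB0|hBp].
  have hv : forall j, P j -> v j = 0.
    move=> j hj; apply/eqP; rewrite -sqrf_eq0; apply/eqP.
    move/eqP: hB0; rewrite eq_sym psumr_eq0 => [/allP hall|j' _]; last exact: sqr_ge0.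
    by apply/eqP; apply: (implyP (hall j (mem_index_enum j))).
  have -> : C = 0 by rewrite /C big1 // => j hj; rewrite hv // mulr0.
  by rewrite expr0n /= -hB0 mulr0.
by rewrite -subr_ge0; move: key; rewrite pmulr_rge0.
Qed.

Lemma minkowski (I : finType) (P : pred I) (u v : I -> R) :
  Num.sqrt (\sum_(j | P j) (u j + v j) ^+ 2) <=
  Num.sqrt (\sum_(j | P j) u j ^+ 2) + Num.sqrt (\sum_(j | P j) v j ^+ 2).
Proof.
set A := \sum_(j | P j) u j ^+ 2; set B := \sum_(j | P j) v j ^+ 2.
set C := \sum_(j | P j) u j * v j.
have hA : 0 <= A by exact: sum_sq_ge0.
have hB : 0 <= B by exact: sum_sq_ge0.
have hs : 0 <= Num.sqrt A + Num.sqrt B by rewrite addr_ge0 ?sqrtr_ge0.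
rewrite -(ger0_norm hs) -sqrtr_sqr ler_sqrt ?sqr_ge0 //.
have -> : \sum_(j | P j) (u j + v j) ^+ 2 = A + 2 * C + B.
  rewrite (eq_bigr (fun j => u j ^+ 2 + 2 * (u j * v j) + v j ^+ 2)); last by move=> j _; ring.
  by rewrite !big_split /= -mulr_sumr.
have hC : C <= Num.sqrt A * Num.sqrt B.
  rewrite -sqrtrM // (le_trans (ler_norm C)) // -sqrtr_sqr ler_sqrt ?mulr_ge0 //.
  exact: cauchy_schwarz.
rewrite sqrrD !sqr_sqrtr //; lra.
Qed.

End Norms.

Section Spec.
Variable R : realType.
Variables m n : nat.
Local Open Scope classical_set_scope.

Lemma norm2_ge0 p (v : 'cV[R]_p) : 0 <= norm2 v.
Proof. exact: sqrtr_ge0. Qed.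

Lemma norm2_scale p (a : R) (v : 'cV[R]_p) : norm2 (a *: v) = `|a| * norm2 v.
Proof.
rewrite /norm2 (eq_bigr (fun i => a ^+ 2 * v i 0 ^+ 2)); last by move=> i _; rewrite mxE exprMn.
by rewrite -mulr_sumr sqrtrM ?sqr_ge0 // sqrtr_sqr.
Qed.

Lemma norm2_le_l1 p (P : pred 'I_p) (v : 'cV[R]_p) :
  Num.sqrt (\sum_(i | P i) v i 0 ^+ 2) <= \sum_(i | P i) `|v i 0|.
Proof.
rewrite (eq_bigr (fun i => `|v i 0| ^+ 2)); last by move=> i _; rewrite real_normK ?num_real.
by apply: sqrt_sum_le => i _.
Qed.

Lemma coord_le_norm2 p (v : 'cV[R]_p) i : `|v i 0| <= norm2 v.
Proof.
rewrite /norm2 -sqrtr_sqr ler_sqrt ?sum_sq_ge0 // (bigD1 i) //= lerDl.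
by apply: sumr_ge0 => j _; rewrite sqr_ge0.
Qed.

Definition specset (A : 'M[R]_(m, n)) :=
  [set e : R | exists x : 'cV[R]_n, norm2 x <= 1 /\ e = norm2 (A *m x)].

Lemma specset_ub (A : 'M[R]_(m, n)) : has_ubound (specset A).
Proof.
exists (\sum_(j < m) \sum_(i < n) `|A j i|) => e [x [hx ->]].
apply: (le_trans (norm2_le_l1 predT _)).
apply: ler_sum => j _; rewrite mxE.
apply: (le_trans (ler_norm_sum _ _ _)); apply: ler_sum => i _.
rewrite normrM ler_piMr //.
exact: le_trans (coord_le_norm2 x i) hx.
Qed.

Lemma specnorm_ge0 (A : 'M[R]_(m, n)) : 0 <= specnorm A.
Proof.
apply: (ub_le_sup (specset_ub A)); exists 0; split.
  by rewrite /norm2 big1 ?sqrtr0 // => i _; rewrite mxE expr0n.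
by rewrite mulmx0 /norm2 big1 ?sqrtr0 // => i _; rewrite mxE expr0n.
Qed.

Lemma specnorm_bound (A : 'M[R]_(m, n)) (v : 'cV[R]_n) : norm2 (A *m v) <= specnorm A * norm2 v.
Proof.
have [h0|hp] := eqVneq (norm2 v) 0.
  have hv : v = 0.
    apply/matrixP => i j; rewrite ord1 mxE; apply/eqP; rewrite -normr_eq0 eq_le normr_ge0 andbT.
    by rewrite -h0 coord_le_norm2.
  by rewrite h0 mulr0 hv mulmx0 /norm2 big1 ?sqrtr0 // => i _; rewrite mxE expr0n.
have hpos : 0 < norm2 v by rewrite lt_def hp norm2_ge0.
have h : forall e, specset A e -> e <= specnorm A.
  by move=> e he; apply: (ub_le_sup (specset_ub A)).
have : norm2 (A *m ((norm2 v)^-1 *: v)) <= specnorm A.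
  apply: h; exists ((norm2 v)^-1 *: v); split => //.
  by rewrite norm2_scale ger0_norm ?invr_ge0 ?norm2_ge0 // mulVf.
rewrite -scalemxAr norm2_scale ger0_norm ?invr_ge0 ?norm2_ge0 //.
by rewrite mulrC -ler_pdivlMr ?invr_gt0 // invrK.
Qed.

End Spec.

Section Main.
Variable R : realType.
Variables m n : nat.
Local Open Scope classical_set_scope.

Lemma entryB p q (M N : 'M[R]_(p, q)) i j : (M - N) i j = M i j - N i j.
Proof. by rewrite !mxE. Qed.

Lemma normInf_le (v : 'cV[R]_n) B : 0 <= B -> (forall i, `|v i 0| <= B) -> normInf v <= B.
Proof.
move=> hB h; apply: (big_ind (fun t => t <= B)) => // u w hu hw.
by rewrite ge_max hu hw.
Qed.

Lemma normInf_ge0 (v : 'cV[R]_n) : 0 <= normInf v.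
Proof.
apply: (big_ind (fun t => 0 <= t)) => // u w hu hw.
by rewrite le_max hu.
Qed.

Lemma gap_identity (A : 'M[R]_(m, n)) (b : 'cV[R]_m) (c : 'rV[R]_n) (x : 'cV[R]_n) (y : 'rV[R]_m) :
  (y *m b) 0 0 - (c *m x) 0 0 =
  \sum_j y 0 j * (b j 0 - (A *m x) j 0) + \sum_i ((y *m A) 0 i - c 0 i) * x i 0.
Proof.
have e1 : \sum_j y 0 j * (A *m x) j 0 = \sum_i (y *m A) 0 i * x i 0.
  have := congr1 (fun M : 'M[R]_1 => M 0 0) (mulmxA y A x) => /=.
  by rewrite [X in X = _]mxE [X in _ = X]mxE.
rewrite (eq_bigr (fun j => y 0 j * b j 0 - y 0 j * (A *m x) j 0)); last by move=> j _; rewrite mulrBr.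
rewrite (eq_bigr (fun i => (y *m A) 0 i * x i 0 - c 0 i * x i 0) (P := xpredT)); last by move=> i _; rewrite mulrBl.
rewrite !sumrB e1 [(y *m b) 0 0]mxE [(c *m x) 0 0]mxE.
lra.
Qed.

Lemma dist_col_ge0 (A : 'M[R]_(m, n)) (V : {set 'I_m}) (U : {set 'I_n}) (k : 'I_n) : 0 <= dist_col A V U k.
Proof.
apply: lb_le_inf.
  by exists (Num.sqrt (\sum_(j in V) (A j k - \sum_(i in U :\ k) 0 * A j i) ^+ 2)), (fun _ => 0).
by move=> e [a ->]; exact: sqrtr_ge0.
Qed.

Lemma dist_col_bound (A : 'M[R]_(m, n)) (V : {set 'I_m}) (U : {set 'I_n}) (k : 'I_n) (d : 'I_n -> R) (G : R) :
  k \in U -> G <= dist_col A V U k ->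
  `|d k| * G <= Num.sqrt (\sum_(j in V) (\sum_(i in U) A j i * d i) ^+ 2).
Proof.
move=> hk hG.
have [dk0|dkn0] := eqVneq (d k) 0.
  by rewrite dk0 normr0 mul0r sqrtr_ge0.
have hpos : 0 < `|d k| by rewrite normr_gt0.
rewrite mulrC -ler_pdivlMr //.
apply: (le_trans hG).
have hlb : has_lbound [set e : R | exists a : 'I_n -> R,
    e = Num.sqrt (\sum_(j in V) (A j k - \sum_(i in U :\ k) a i * A j i) ^+ 2)].
  by exists 0 => e [a ->]; exact: sqrtr_ge0.
have := ge_inf hlb.
move=> /(_ (Num.sqrt (\sum_(j in V) (A j k - \sum_(i in U :\ k) (- d i / d k) * A j i) ^+ 2))).
move=> h; apply: le_trans; first by apply: h; eexists.
rewrite le_eqVlt; apply/orP; left; apply/eqP.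
rewrite [X in Num.sqrt X = _](eq_bigr (fun j => (\sum_(i in U) A j i * d i) ^+ 2 / (d k) ^+ 2)); last first.
  move=> j _; rewrite (big_setD1 _ hk) /=.
  have -> : \sum_(i in U :\ k) - d i / d k * A j i = - (\sum_(i in U :\ k) A j i * d i) / d k.
    rewrite mulNr mulr_suml -sumrN; apply: eq_bigr => i _; ring.
  by field.
rewrite -mulr_suml sqrtrM ?sum_sq_ge0 // sqrtrV ?sqr_ge0 // sqrtr_sqr.
by [].
Qed.

End Main.

Unset Implicit Arguments.
Set Strict Implicit.

Theorem mainTheorem11 (R : realType) (m n : nat) (A : 'M[R]_(m, n))
  (b : 'cV[R]_m) (c : 'rV[R]_n) (xs : 'cV[R]_n) (ys : 'rV[R]_m) :
  primal_optimal A b c xs ->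
  (forall x, primal_optimal A b c x -> x = xs) ->
  dual_optimal A b c ys ->
  (forall y, dual_optimal A b c y -> y = ys) ->
  forall x : 'cV[R]_n, primal_feasible A b x ->
  ((normInf (xs - x))%:E <=
     ((c *m (xs - x)) 0 0 * (1 + specnorm A))%:E *
     (lambdaA A b c xs ys * mine (gammaA A xs ys) 1%:E)^-1)%E.
Proof.
move=> hoxs uxs hoys uys x hx.
have sd := strong_duality hoxs hoys.
case: hoxs => hxs oxs; case: hoys => hys oys.
have hK := specnorm_ge0 A.
have eg : (c *m (xs - x)) 0 0 = (c *m xs) 0 0 - (c *m x) 0 0 by rewrite mulmxBr entryB.
have hg0 : 0 <= (c *m (xs - x)) 0 0 by rewrite eg subr_ge0; exact: oxs.
move: hg0; rewrite le_eqVlt => /orP [/eqP g0|gpos].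
  have hxo : primal_optimal A b c x.
    split=> // x' hx'; have := oxs x' hx'; rewrite -g0 in eg; lra.
  rewrite (uxs x hxo) subrr mulmx0 mxE mul0r mul0e.
  rewrite lee_fin; apply: normInf_le => // i; by rewrite mxE normr0.
set g := (c *m (xs - x)) 0 0 in eg gpos *.
set K := specnorm A in hK *.
set V := Vset ys; set U := Uset xs.
pose s j := b j 0 - (A *m x) j 0.
pose r i := (ys *m A) 0 i - c 0 i.
have hs : forall j, 0 <= s j by move=> j; rewrite /s subr_ge0; case: hx => h _; exact: h.
have hr : forall i, 0 <= r i by move=> i; rewrite /r subr_ge0; case: hys => h _; exact: h.
have hx0 : forall i, 0 <= x i 0 by move=> i; case: hx => _ h; have := h i 0; rewrite mxE.
have hxs0 : forall i, 0 <= xs i 0 by move=> i; case: hxs => _ h; have := h i 0; rewrite mxE.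
have hys0 : forall j, 0 <= ys 0 j by move=> j; case: hys => _ h; have := h 0 j; rewrite mxE.
have gapE : g = \sum_j ys 0 j * s j + \sum_i r i * x i 0.
  by rewrite eg -sd (gap_identity A).
have CS : forall j, j \in V -> (A *m xs) j 0 = b j 0.
  have := gap_identity A b c xs ys; rewrite sd subrr => /esym/eqP.
  rewrite paddr_eq0; first last.
  - by apply: sumr_ge0 => i _; apply: mulr_ge0; [exact: hr|exact: hxs0].
  - apply: sumr_ge0 => j _; apply: mulr_ge0 => //.
    by rewrite subr_ge0; case: hxs => h _; exact: h.
  case/andP => hsum _ j hj.
  have hnn : forall j, xpredT j -> 0 <= ys 0 j * (b j 0 - (A *m xs) j 0).
    by move=> j' _; apply: mulr_ge0 => //; rewrite subr_ge0; case: hxs => h _; exact: h.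
  have := (psumr_eq0P hnn (eqP hsum)) j isT.
  move=> /eqP; rewrite mulf_eq0 subr_eq0 => /orP [/eqP hy0|/eqP -> //].
  by move: hj; rewrite inE hy0 ltxx.
have xsU : forall i, i \notin U -> xs i 0 = 0.
  move=> i; rewrite inE -leNgt => h; apply/eqP; rewrite eq_le h hxs0.
  by [].
have core : forall L G, 0 < L -> 0 < G -> G <= 1 ->
    (forall j, j \in V -> L <= ys 0 j) -> (forall i, i \notin U -> L <= r i) ->
    (forall k, k \in U -> G <= dist_col A V U k) ->
    forall i, `|xs i 0 - x i 0| * (L * G) <= g * (1 + K).
  move=> L G hL hG hG1 hLV hLU hGU.
  set S := \sum_(j | j \in V) s j.
  set X := \sum_(i | i \notin U) x i 0.
  have hS : 0 <= S by apply: sumr_ge0.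
  have hX : 0 <= X by apply: sumr_ge0.
  have hLSX : L * (S + X) <= g.
    rewrite gapE (bigID (fun j => j \in V)) (bigID (fun i => i \notin U)) /=.
    have h1 : L * S <= \sum_(j | j \in V) ys 0 j * s j.
      rewrite mulr_sumr; apply: ler_sum => j hj; apply: ler_wpM2r; [exact: hs|exact: hLV].
    have h2 : L * X <= \sum_(i | i \notin U) r i * x i 0.
      rewrite mulr_sumr; apply: ler_sum => i hi; apply: ler_wpM2r; [exact: hx0|exact: hLU].
    have h3 : 0 <= \sum_(j | j \notin V) ys 0 j * s j by apply: sumr_ge0 => j _; apply: mulr_ge0.
    have h4 : 0 <= \sum_(i | ~~ (i \notin U)) r i * x i 0 by apply: sumr_ge0 => i _; apply: mulr_ge0.
    lra.
  have hgK : g <= g * (1 + K) by nra.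
  move=> i; case: (boolP (i \in U)) => hi; last first.
    rewrite xsU // sub0r normrN ger0_norm //.
    have hxi : x i 0 <= X by rewrite /X (bigD1 i) //= lerDl; apply: sumr_ge0.
    have e1 : x i 0 * (L * G) <= X * L.
      rewrite mulrA; apply: (le_trans (ler_wpM2r (ltW hG) (ler_wpM2r (ltW hL) hxi))).
      by rewrite ler_piMr // mulr_ge0 // ltW.
    apply: (le_trans e1); apply: le_trans hgK; nra.
  pose w j := \sum_(i in U) A j i * (xs i 0 - x i 0).
  have hw := dist_col_bound (fun i => xs i 0 - x i 0) hi (hGU i hi).
  rewrite -/w /= in hw.
  pose xbar := \col_(i < n) (if i \in U then 0 else x i 0).
  have ew : forall j, j \in V -> w j = s j + (A *m xbar) j 0.
    move=> j hj.
    have e1 : s j = \sum_i A j i * (xs i 0 - x i 0).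
      rewrite /s -(CS j hj) [(A *m xs) j 0]mxE [(A *m x) j 0]mxE -sumrB.
      by apply: eq_bigr => i' _; rewrite mulrBr.
    have eA : (A *m xbar) j 0 = \sum_(i | i \notin U) A j i * x i 0.
      rewrite mxE (bigID (fun i => i \in U)) /= big1 ?add0r; last by move=> i' hi'; rewrite mxE hi' mulr0.
      by apply: eq_bigr => i' hi'; rewrite mxE (negbTE hi').
    have e2 : \sum_i A j i * (xs i 0 - x i 0) = w j - (A *m xbar) j 0.
      rewrite eA (bigID (fun i => i \in U)) /=; congr (_ + _).
      rewrite -sumrN; apply: eq_bigr => i' hi'.
      by rewrite xsU // sub0r mulrN.
    rewrite e1 e2; ring.
  have hw2 : Num.sqrt (\sum_(j in V) w j ^+ 2) <= S + K * X.
    rewrite (eq_bigr (fun j => (s j + (A *m xbar) j 0) ^+ 2)); last by move=> j hj; rewrite ew.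
    apply: (le_trans (minkowski _ _ _)); apply: lerD; first exact: sqrt_sum_le.
    apply: (@le_trans _ _ (norm2 (A *m xbar))).
      rewrite ler_sqrt ?sum_sq_ge0 // [X in _ <= X](bigID (fun j => j \in V)) /= lerDl.
      by apply: sumr_ge0 => j _; rewrite sqr_ge0.
    apply: (le_trans (specnorm_bound A xbar)); apply: ler_wpM2l => //.
    apply: (le_trans (norm2_le_l1 predT _)).
    rewrite (bigID (fun i => i \in U)) /= big1 ?add0r; last by move=> i' hi'; rewrite mxE hi' normr0.
    rewrite le_eqVlt; apply/orP; left; apply/eqP; apply: eq_bigr => i' hi'.
    by rewrite mxE (negbTE hi') ger0_norm.
  have e3 : `|xs i 0 - x i 0| * G <= S + K * X := le_trans hw hw2.
  have e4 : `|xs i 0 - x i 0| * (L * G) <= L * (S + K * X).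
    by rewrite mulrCA; apply: ler_wpM2l => //; exact: ltW.
  apply: (le_trans e4).
  have : L * (S + K * X) <= L * ((1 + K) * (S + X)).
    apply: ler_wpM2l; first exact: ltW.
    nra.
  move=> h; apply: (le_trans h); rewrite mulrCA mulrC; apply: ler_wpM2r; last exact: hLSX.
  by rewrite addr_ge0.
set a := g * (1 + K).
have ha : 0 < a by rewrite /a mulr_gt0 // ltr_wpDr.
set N := normInf (xs - x).
have hN : 0 <= N := normInf_ge0 _.
have core' : forall L G, 0 < L -> 0 < G -> G <= 1 ->
    (L%:E <= lambdaA A b c xs ys)%E -> (G%:E <= mine (gammaA A xs ys) 1%:E)%E ->
    N * (L * G) <= a.
  move=> L G hL hG hG1 hLl hGg.
  rewrite -ler_pdivlMr ?mulr_gt0 //.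
  apply: normInf_le; first by rewrite divr_ge0 // ?ltW // mulr_gt0.
  move=> i; rewrite entryB ler_pdivlMr ?mulr_gt0 //.
  apply: core => //.
  - move=> j hj; rewrite -lee_fin; apply: (le_trans hLl).
    rewrite /lambdaA ge_min; apply/orP; left; rewrite ge_min; apply/orP; right.
    exact: bigmin_le.
  - move=> i' hi'; rewrite -lee_fin; apply: (le_trans hLl).
    rewrite /lambdaA ge_min; apply/orP; right; rewrite ge_min; apply/orP; right.
    by apply: bigmin_le; rewrite inE.
  - move=> k hk; rewrite -lee_fin; apply: (le_trans hGg).
    rewrite ge_min; apply/orP; left.
    exact: bigmin_le.
have hlam0 : (0 <= lambdaA A b c xs ys)%E.
  rewrite /lambdaA !le_min; apply/andP; split; apply/andP; split; apply: bigmin_ge0 => i hi; rewrite lee_fin.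
  - by move: hi; rewrite inE => /ltW.
  - by move: hi; rewrite inE => /ltW.
  - by rewrite subr_ge0; case: hxs => h _; exact: h.
  - exact: hr.
have hgam0 : (0 <= mine (gammaA A xs ys) 1%:E)%E.
  rewrite le_min lee_fin ler01 andbT.
  by apply: bigmin_ge0 => k _; rewrite lee_fin dist_col_ge0.
have hgam1 : (mine (gammaA A xs ys) 1%:E <= 1%:E)%E by rewrite ge_min lexx orbT.
move: (lambdaA A b c xs ys) (mine (gammaA A xs ys) 1%:E) hlam0 hgam0 hgam1 core'.
move=> [l||] [gm||] //; rewrite ?lee_fin => hl0 hg0 hg1 core''.
- move: hg0; rewrite le_eqVlt => /orP [/eqP <-|hgp].
    by rewrite -EFinM mulr0 inve0 gt0_muley ?lte_fin // leey.
  move: hl0; rewrite le_eqVlt => /orP [/eqP <-|hlp].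
    by rewrite -EFinM mul0r inve0 gt0_muley ?lte_fin // leey.
  rewrite -EFinM inver gt_eqF ?mulr_gt0 // -EFinM lee_fin.
  by rewrite ler_pdivlMr ?mulr_gt0 //; apply: core''.
- move: hg0; rewrite le_eqVlt => /orP [/eqP <-|hgp].
    by rewrite mule0 inve0 gt0_muley ?lte_fin // leey.
  rewrite gt0_mulye ?lte_fin // invey mule0 lee_fin.
  rewrite leNgt; apply/negP => hNp.
  have := core'' ((a + 1) / (N * gm)) gm.
  have hL : 0 < (a + 1) / (N * gm) by rewrite divr_gt0 ?mulr_gt0 // ltr_wpDl // ltW.
  move=> /(_ hL hgp hg1 (leey _)); rewrite lexx => /(_ isT).
  have hN0 : N != 0 by rewrite gt_eqF.
  have hg0' : gm != 0 by rewrite gt_eqF.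
  have -> : N * ((a + 1) / (N * gm) * gm) = a + 1.
    by field; rewrite hN0 hg0'.
  lra.
Qed.
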